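(* For all flow graphs $h_1,h_2$ over a flow monoid $\mathbb{M}$ with $h_1\#\#h_2$, one has $h_1.\mathit{flow}\uplus h_2.\mathit{flow}\ \ge\ (h_1\uplus h_2).\mathit{flow}$ pointwise on $X_1\uplus X_2$.
   Context: A flow monoid is a commutative monoid $(\mathbb{M},+,0)$ such that $n\le m :\iff \exists o.\ m=n+o$ is a partial order in which every ascending chain $K$ has a least upper bound $\bigsqcup K$, and $n+\bigsqcup K=\bigsqcup(n+K)$. $\mathcal{C}(\mathbb{M}\to\mathbb{M})$ is the set of functions commuting with least upper bounds of ascending chains. Infinite sums denote least upper bounds of finite partial sums. A flow graph is $h=(X,E,\mathit{in})$ with $X\subseteq\mathbb{N}$ finite, $E:X\times\mathbb{N}\to\mathcal{C}(\mathbb{M}\to\mathbb{M})$, $\mathit{in}:(\mathbb{N}\setminus X)\times X\to\mathbb{M}$; $\mathit{in}_x=\sum_{y\in\mathbb{N}\setminus X}\mathit{in}(y,x)$; the flow $h.\mathit{flow}$ is the least $\mathit{flow}:X\to\mathbb{M}$ with $\mathit{flow}(x)=\mathit{in}_x+\sum_{y\in X}E(y,x)(\mathit{flow}(y))$; the outflow is $h.\mathit{out}(x,y)=E(x,y)(h.\mathit{flow}(x))$ for $x\in X$, $y\notin X$. For $h_i=(X_i,E_i,\mathit{in}_i)$: $h_1\#\#h_2$ iff $X_1\cap X_2=\emptyset$ and for all $x\in X_1,y\in X_2$, $h_1.\mathit{out}(x,y)=\mathit{in}_2(x,y)$ and $h_2.\mathit{out}(y,x)=\mathit{in}_1(y,x)$;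 and $h_1\uplus h_2=(X_1\uplus X_2,E_1\uplus E_2,(\mathit{in}_1\uplus\mathit{in}_2)|_{(\mathbb{N}\setminus(X_1\uplus X_2))\times(X_1\uplus X_2)})$. *)

(* Defs.v *)
From Stdlib Require Import ClassicalEpsilon.
From mathcomp Require Import all_boot finmap.
Set Implicit Arguments. Unset Strict Implicit. Unset Printing Implicit Defensive.
Local Open Scope fset_scope.

Definition mle {T : Type} (add : T -> T -> T) (a b : T) : Prop :=
  exists o, b = add a o.

Definition ascending {T : Type} (add : T -> T -> T) (K : nat -> T) : Prop :=
  forall n, mle add (K n) (K n.+1).

Definition is_lub {T : Type} (add : T -> T -> T) (K : nat -> T) (l : T) : Prop :=
  (forall n, mle add (K n) l) /\
  (forall u, (forall n, mle add (K n) u) -> mle add l u).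

Definition partial_order {T : Type} (R : T -> T -> Prop) : Prop :=
  (forall a, R a a) /\ (forall a b c, R a b -> R b c -> R a c) /\
  (forall a b, R a b -> R b a -> a = b).

Record flowMonoid := FlowMonoid {
  fm_car :> Type;
  fm_add : fm_car -> fm_car -> fm_car;
  fm_zero : fm_car;
  fm_addC : forall a b, fm_add a b = fm_add b a;
  fm_addA : forall a b c, fm_add a (fm_add b c) = fm_add (fm_add a b) c;
  fm_add0 : forall a, fm_add fm_zero a = a;
  fm_po : partial_order (mle fm_add);
  fm_chain_lub : forall K, ascending fm_add K -> exists l, is_lub fm_add K l;
  fm_add_lub : forall n K l, ascending fm_add K -> is_lub fm_add K l ->
                 is_lub fm_add (fun i => fm_add n (K i)) (fm_add n l)
}.

Section FlowDefs.
Variable M : flowMonoid.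

Local Notation le := (mle (@fm_add M)).

Definition sup (K : nat -> M) : M :=
  epsilon (inhabits (fm_zero M)) (is_lub (@fm_add M) K).

Definition fsum {I : Type} (r : seq I) (F : I -> M) : M :=
  \big[@fm_add M / fm_zero M]_(i <- r) F i.

Definition isum (g : nat -> M) : M :=
  sup (fun n => fsum (iota 0 n) g).

Definition continuous_fm (f : M -> M) : Prop :=
  forall K l, ascending (@fm_add M) K -> is_lub (@fm_add M) K l ->
    is_lub (@fm_add M) (fun i => f (K i)) (f l).

(* flow graphs (X, E, in); E is meaningful on X x N, in on (N \ X) x X *)
Record flowGraph := FlowGraph {
  fg_X : {fset nat};
  fg_E : nat -> nat -> M -> M;
  fg_in : nat -> nat -> M
}.

Definition fg_wf (h : flowGraph) : Prop :=
  forall x y, x \in fg_X h -> continuous_fm (fg_E h x y).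

Definition inflow (h : flowGraph) (x : nat) : M :=
  isum (fun y => if y \in fg_X h then fm_zero M else fg_in h y x).

Definition is_flow_sol (h : flowGraph) (f : nat -> M) : Prop :=
  forall x, x \in fg_X h ->
    f x = fm_add (inflow h x) (fsum (fg_X h) (fun y => fg_E h y x (f y))).

Definition is_least_flow (h : flowGraph) (f : nat -> M) : Prop :=
  is_flow_sol h f /\
  forall g, is_flow_sol h g -> forall x, x \in fg_X h -> le (f x) (g x).

(* h.flow : the least solution (only its values on X are meaningful) *)
Definition flow (h : flowGraph) : nat -> M :=
  epsilon (inhabits (fun _ => fm_zero M)) (is_least_flow h).

Definition outflow (h : flowGraph) (x y : nat) : M := fg_E h x y (flow h x).

Definition fg_compat (h1 h2 : flowGraph) : Prop :=
  (forall x, x \in fg_X h1 -> x \notin fg_X h2) /\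
  (forall x y, x \in fg_X h1 -> y \in fg_X h2 ->
     outflow h1 x y = fg_in h2 x y /\ outflow h2 y x = fg_in h1 y x).

(* h1 (+) h2 ; the inflow is only consulted on (N \ (X1 u X2)) x (X1 u X2) *)
Definition fg_union (h1 h2 : flowGraph) : flowGraph :=
  FlowGraph (fg_X h1 `|` fg_X h2)
    (fun x y => if x \in fg_X h1 then fg_E h1 x y else fg_E h2 x y)
    (fun y x => if x \in fg_X h1 then fg_in h1 y x else fg_in h2 y x).

Definition flow_union (h1 h2 : flowGraph) (x : nat) : M :=
  if x \in fg_X h1 then flow h1 x else flow h2 x.

End FlowDefs.

(* Main.v *)
Require Import Defs.
From mathcomp Require Import all_boot finmap.
From HB Require Import structures.
From Stdlib Require Import ClassicalEpsilon FunctionalExtensionality.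
Set Implicit Arguments. Unset Strict Implicit. Unset Printing Implicit Defensive.
Local Open Scope fset_scope.

HB.instance Definition fm_comlaw (M : flowMonoid) :=
  Monoid.isComLaw.Build (fm_car M) (fm_zero M) (@fm_add M)
    (@fm_addA M) (@fm_addC M) (@fm_add0 M).

Section Aux.
Variable M : flowMonoid.
Local Notation add := (@fm_add M).
Local Notation le := (mle (@fm_add M)).
Local Notation z := (fm_zero M).

Lemma le_refl a : le a a.
Proof. by case: (fm_po M) => H _; apply: H. Qed.
Lemma le_trans a b c : le a b -> le b c -> le a c.
Proof. by case: (fm_po M) => _ [H _]; apply: H. Qed.
Lemma le_anti a b : le a b -> le b a -> a = b.
Proof. by case: (fm_po M) => _ [_ H]; apply: H. Qed.
Lemma le0 a : le z a.
Proof. by exists a; rewrite fm_add0. Qed.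
Lemma le_add a b c d : le a b -> le c d -> le (add a c) (add b d).
Proof.
move=> [o ->] [p ->]; exists (add o p).
by rewrite -!fm_addA; congr (add a _); rewrite fm_addA (fm_addC o) -fm_addA.
Qed.

Lemma asc_mono K : ascending add K -> forall m n, m <= n -> le (K m) (K n).
Proof.
move=> HK m n /subnKC <-; elim: (n - m) => [|k IH]; first by rewrite addn0; apply: le_refl.
by rewrite addnS; apply: le_trans IH (HK _).
Qed.

Lemma lub_unique K l l' : is_lub add K l -> is_lub add K l' -> l = l'.
Proof. by move=> [H1 H2] [H3 H4]; apply: le_anti; [apply: H2|apply: H4]. Qed.

Lemma sup_lub K : ascending add K -> is_lub add K (sup K).
Proof. by move=> HK; apply: epsilon_spec; apply: fm_chain_lub. Qed.

Lemma lub_shift K l : ascending add K -> is_lub add K l -> is_lub add (fun n => K n.+1) l.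
Proof.
move=> HK [H1 H2]; split => // u Hu; apply: H2 => n.
by apply: le_trans (HK n) (Hu n).
Qed.

Lemma lub_evconst K N c : ascending add K -> (forall n, N <= n -> K n = c) ->
  is_lub add K c.
Proof.
move=> HK Hc; split.
  move=> n; rewrite -(Hc (maxn n N)) ?leq_maxr //; apply: asc_mono => //.
  by rewrite leq_maxl.
by move=> u Hu; rewrite -(Hc N) //.
Qed.

Lemma asc_add A B : ascending add A -> ascending add B ->
  ascending add (fun n => add (A n) (B n)).
Proof. by move=> HA HB n; apply: le_add. Qed.

Lemma lub_add2 A B a b : ascending add A -> ascending add B ->
  is_lub add A a -> is_lub add B b -> is_lub add (fun n => add (A n) (B n)) (add a b).
Proof.
move=> HA HB [A1 A2] [B1 B2]; split; first by move=> n; apply: le_add.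
move=> u Hu.
have H1 m : le (add (A m) b) u.
  have [_ L] := fm_add_lub (A m) HB (conj B1 B2).
  apply: L => n; apply: le_trans (Hu (maxn m n)).
  by apply: le_add; apply: asc_mono; rewrite ?leq_maxl ?leq_maxr.
have [_ L] := fm_add_lub b HA (conj A1 A2).
rewrite fm_addC; apply: L => n; rewrite fm_addC; exact: H1.
Qed.

Lemma fsum_cons I (x : I) r F : fsum (x :: r) F = add (F x) (fsum r F).
Proof. by rewrite /fsum big_cons. Qed.
Lemma fsum_nil I F : fsum (@nil I) F = z.
Proof. by rewrite /fsum big_nil. Qed.

Lemma fsum_le (I : eqType) (r : seq I) F G : (forall y, y \in r -> le (F y) (G y)) ->
  le (fsum r F) (fsum r G).
Proof.
elim: r => [|x r IH] H; first by rewrite !fsum_nil; apply: le_refl.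
rewrite !fsum_cons; apply: le_add; first by apply: H; rewrite inE eqxx.
by apply: IH => y Hy; apply: H; rewrite inE Hy orbT.
Qed.

Lemma fsum_lub (I : eqType) (r : seq I) (K : I -> nat -> M) l :
  (forall y, y \in r -> ascending add (K y) /\ is_lub add (K y) (l y)) ->
  ascending add (fun n => fsum r (fun y => K y n)) /\
  is_lub add (fun n => fsum r (fun y => K y n)) (fsum r l).
Proof.
elim: r => [|x r IH] H.
  rewrite !fsum_nil; split; first by move=> n; rewrite !fsum_nil; apply: le_refl.
  have -> : (fun n => fsum [::] (fun y => K y n)) = fun _ => z.
    by apply: functional_extensionality_dep => n; rewrite fsum_nil.
  by apply: (@lub_evconst _ 0) => // n; apply: le_refl.
have [Ha Hl] := H x (mem_head _ _).
have [Ra Rl] : ascending add (fun n => fsum r (fun y => K y n)) /\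
  is_lub add (fun n => fsum r (fun y => K y n)) (fsum r l).
  by apply: IH => y Hy; apply: H; rewrite inE Hy orbT.
have E : (fun n => fsum (x :: r) (fun y => K y n)) =
         fun n => add (K x n) (fsum r (fun y => K y n)).
  by apply: functional_extensionality_dep => n; rewrite fsum_cons.
rewrite E fsum_cons; split; first exact: asc_add.
exact: lub_add2.
Qed.

Lemma psum_S (g : nat -> M) n : fsum (iota 0 n.+1) g = add (fsum (iota 0 n) g) (g n).
Proof. by rewrite -addn1 iotaD /fsum big_cat /= big_seq1. Qed.

Lemma psum_asc (g : nat -> M) : ascending add (fun n => fsum (iota 0 n) g).
Proof. by move=> n; rewrite psum_S; exists (g n). Qed.

Lemma isum_add a b : isum (fun y => add (a y) (b y)) = add (isum a) (isum b).
Proof.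
rewrite /isum; apply: lub_unique (sup_lub (psum_asc _)) _.
have -> : (fun n => fsum (iota 0 n) (fun y => add (a y) (b y))) =
          fun n => add (fsum (iota 0 n) a) (fsum (iota 0 n) b).
  by apply: functional_extensionality_dep => n; rewrite /fsum big_split.
by apply: lub_add2; try apply: psum_asc; apply: sup_lub; apply: psum_asc.
Qed.

Lemma isum_fin (X : {fset nat}) b : (forall y, y \notin X -> b y = z) ->
  isum b = fsum X b.
Proof.
move=> Hb; rewrite /isum; apply: lub_unique (sup_lub (psum_asc _)) _.
apply: (@lub_evconst _ (\max_(y <- X) y).+1); first exact: psum_asc.
move=> n Hn; rewrite /fsum.
rewrite [LHS](bigID (fun y => y \in X)) /=.
rewrite [X in add _ X]big1; last by move=> i iX; apply: Hb.
rewrite Monoid.mulm1 -big_filter.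
apply: perm_big; apply: uniq_perm.
- by apply: filter_uniq; apply: iota_uniq.
- by apply: fset_uniq.
move=> y; rewrite mem_filter; apply/andP/idP => [[]//|yX]; split => //.
rewrite mem_iota /= add0n; apply: leq_trans Hn.
by rewrite ltnS; apply: leq_bigmax_seq.
Qed.

Lemma cont_mono (f : M -> M) : continuous_fm f -> forall a b, le a b -> le (f a) (f b).
Proof.
move=> Hf a b ab.
pose K n := if n is 0 then a else b.
have HK : ascending add K by case=> [|n] /=; [exact: ab | exact: le_refl].
have Hl : is_lub add K b by apply: (@lub_evconst _ 1) => // -[|n].
by have [H _] := Hf K b HK Hl; apply: (H 0).
Qed.

Section Kleene.
Variable h : flowGraph M.
Hypothesis hwf : fg_wf h.

Definition Fh (f : nat -> M) x := add (inflow h x) (fsum (fg_X h) (fun y => fg_E h y x (f y))).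

Lemma Fh_mono f g : (forall y, y \in fg_X h -> le (f y) (g y)) -> forall x, le (Fh f x) (Fh g x).
Proof.
move=> H x; apply: le_add; first exact: le_refl.
apply: fsum_le => y Hy; apply: cont_mono; [exact: hwf | exact: H].
Qed.

Definition fn n := iter n Fh (fun _ => z).

Lemma fn_asc x : ascending add (fun n => fn n x).
Proof.
move=> n; elim: n x => [|n IH] x; first exact: le0.
by apply: Fh_mono => y _; apply: IH.
Qed.

Definition lfp x := sup (fun n => fn n x).

Lemma lfp_least : is_least_flow h lfp.
Proof.
split.
  move=> x Hx; apply: (lub_unique (lub_shift (fn_asc x) (sup_lub (fn_asc x)))).
  have [A L] := fsum_lub (r := fg_X h) (K := fun y n => fg_E h y x (fn n y))
      (l := fun y => fg_E h y x (lfp y)) (fun y Hy => conj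
         (fun n => cont_mono (@hwf y x Hy) (fn_asc y n))
         (@hwf y x Hy _ _ (fn_asc y) (sup_lub (fn_asc y)))).
  exact: (fm_add_lub (inflow h x) A L).
move=> g Hg x Hx.
have H n : forall x, x \in fg_X h -> le (fn n x) (g x).
  elim: n => [|n IH] y Hy; first exact: le0.
  by rewrite (Hg y Hy); apply: Fh_mono.
by have [_ L] := sup_lub (fn_asc x); apply: L => n; apply: H.
Qed.

Lemma flow_least : is_least_flow h (flow h).
Proof. by apply: epsilon_spec; exists lfp; exact: lfp_least. Qed.

End Kleene.

Lemma fsum_eq (X : {fset nat}) (F G : nat -> M) : (forall y, y \in X -> F y = G y) ->
  fsum X F = fsum X G.
Proof. by move=> H; rewrite /fsum big_seq_cond [RHS]big_seq_cond; apply: eq_bigr => i /andP [/H]. Qed.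

Lemma fsum_U (X1 X2 : {fset nat}) (G : nat -> M) : (forall y, y \in X1 -> y \notin X2) ->
  fsum (X1 `|` X2) G = add (fsum X1 G) (fsum X2 G).
Proof.
move=> D; rewrite /fsum (big_fsetID _ (mem X1)); congr (add _ _); apply: eq_fbigl => y;
  rewrite !inE /=; case: (boolP (y \in X1)) => [/D|] /=; rewrite ?andbF ?andbT //.
by move/negPf => ->.
Qed.

Lemma flow_split (ha hb : flowGraph M) x : fg_wf ha -> x \in fg_X ha ->
  (forall y, y \in fg_X ha -> y \notin fg_X hb) ->
  (forall y, y \in fg_X hb -> fg_in ha y x = fg_E hb y x (flow hb y)) ->
  flow ha x = add (isum (fun y => if (y \in fg_X ha) || (y \in fg_X hb) then z else fg_in ha y x))
     (add (fsum (fg_X ha) (fun y => fg_E ha y x (flow ha y)))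
          (fsum (fg_X hb) (fun y => fg_E hb y x (flow hb y)))).
Proof.
move=> wf Hx D Hin.
rewrite {1}((flow_least wf).1 x Hx) /inflow.
set B := fun y => if y \in fg_X hb then fg_E hb y x (flow hb y) else z.
have -> : (fun y => if y \in fg_X ha then z else fg_in ha y x) =
  fun y => add (if (y \in fg_X ha) || (y \in fg_X hb) then z else fg_in ha y x) (B y).
  apply: functional_extensionality_dep => y; rewrite /B.
  case: (boolP (y \in fg_X ha)) => [ya|_] /=.
    by rewrite (negPf (D _ ya)) fm_add0.
  case: (boolP (y \in fg_X hb)) => [yb|_]; first by rewrite fm_add0 Hin.
  by rewrite fm_addC fm_add0.
rewrite isum_add [X in add (add _ X) _](@isum_fin (fg_X hb)); last by move=> y yN; rewrite /B (negPf yN).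
rewrite (@fsum_eq _ B (fun y => fg_E hb y x (flow hb y))); last by move=> y yb; rewrite /B yb.
by rewrite -!fm_addA (fm_addC (fsum (fg_X hb) _)).
Qed.

End Aux.

Theorem mainTheorem3 (M : flowMonoid) (h1 h2 : flowGraph M) :
  fg_wf h1 -> fg_wf h2 -> fg_compat h1 h2 ->
  forall x, x \in fg_X h1 `|` fg_X h2 ->
    mle (@fm_add M) (flow (fg_union h1 h2) x) (flow_union h1 h2 x).
Proof.
move=> w1 w2 [D C].
have D' : forall y, y \in fg_X h2 -> y \notin fg_X h1.
  by move=> y y2; apply/negP => /D; rewrite y2.
have wU : fg_wf (fg_union h1 h2).
  move=> x y; rewrite /= in_fsetU; case: (boolP (x \in fg_X h1)) => x1 /= H.
    exact: (@w1 x y x1).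
  exact: (@w2 x y H).
have [_ L] := flow_least wU.
move=> x0 Hx0; apply: (L _ _ x0 Hx0).
move=> x /=; rewrite in_fsetU => Hx.
rewrite /inflow /= fsum_U //.
rewrite (@fsum_eq _ (fg_X h1) _ (fun y => fg_E h1 y x (flow h1 y))); last first.
  by move=> y y1; rewrite /flow_union y1.
rewrite (@fsum_eq _ (fg_X h2) _ (fun y => fg_E h2 y x (flow h2 y))); last first.
  by move=> y y2; rewrite /flow_union (negPf (D' _ y2)).
rewrite /flow_union; case: (boolP (x \in fg_X h1)) => x1.
  rewrite (@flow_split _ h1 h2 x w1 x1 D); last by move=> y y2; case: (C x y x1 y2).
  congr (fm_add _ _); congr isum; apply: functional_extensionality_dep => y.
  by rewrite in_fsetU.
have x2 : x \in fg_X h2 by move: Hx; rewrite (negPf x1).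
rewrite (@flow_split _ h2 h1 x w2 x2 D'); last by move=> y y1; case: (C y x y1 x2).
rewrite (fm_addC (fsum (fg_X h2) _)).
congr (fm_add _ _); congr isum; apply: functional_extensionality_dep => y.
by rewrite in_fsetU orbC.
Qed.
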